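(* Let $M$ and $N$ be monoids and let $M\ast N$ be their monoid free product. Then $M\ast N$ is $U(\mathrm{CF})$ if and only if both $M$ and $N$ are $U(\mathrm{CF})$.
   Context: For a monoid $M$ generated by a finite set $A$, $\mathrm{WP}(M,A)=\{u\#v^{\mathrm{rev}} : u,v\in A^*,\ u=_M v\}$, where $\#\notin A$ and $v^{\mathrm{rev}}$ is the reversal of $v$. A monoid is $U(\mathrm{CF})$ if it is finitely generated (as a monoid) and its word problem with respect to some (equivalently any) finite generating set is context-free. *)

(* Defs.v *)
From Stdlib Require List.
From mathcomp Require Import all_boot.
Set Implicit Arguments. Unset Strict Implicit. Unset Printing Implicit Defensive.

Record monoidT := {
  mcar :> Type;
  mop : mcar -> mcar -> mcar;
  munit : mcar;
  massoc : forall x y z, mop x (mop y z) = mop (mop x y) z;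
  munitl : forall x, mop munit x = x;
  munitr : forall x, mop x munit = x }.

Definition is_hom (M N : monoidT) (f : M -> N) : Prop :=
  f (munit M) = munit N /\ forall x y, f (mop x y) = mop (f x) (f y).

Definition is_free_product (M N P : monoidT) (iM : M -> P) (iN : N -> P) : Prop :=
  is_hom iM /\ is_hom iN /\
  forall (Q : monoidT) (f : M -> Q) (g : N -> Q), is_hom f -> is_hom g ->
    (exists h : P -> Q, is_hom h /\ (forall x, h (iM x) = f x)
                                 /\ (forall y, h (iN y) = g y)) /\
    (forall h1 h2 : P -> Q, is_hom h1 -> is_hom h2 ->
       (forall x, h1 (iM x) = f x) -> (forall y, h1 (iN y) = g y) ->
       (forall x, h2 (iM x) = f x) -> (forall y, h2 (iN y) = g y) ->
       forall p, h1 p = h2 p).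

Record CFG (T : Type) := {
  cfg_V : finType;
  cfg_start : cfg_V;
  cfg_rules : seq (cfg_V * seq (cfg_V + T)) }.

Inductive cfg_step (T : Type) (G : CFG T) : seq (cfg_V G + T) -> seq (cfg_V G + T) -> Prop :=
  | CfgStep : forall (u v rhs : seq (cfg_V G + T)) (X : cfg_V G),
      List.In (X, rhs) (cfg_rules G) ->
      cfg_step (u ++ inl X :: v) (u ++ rhs ++ v).

Inductive cfg_derives (T : Type) (G : CFG T) : seq (cfg_V G + T) -> seq (cfg_V G + T) -> Prop :=
  | CfgRefl : forall s, cfg_derives s s
  | CfgTrans : forall s t r, cfg_step s t -> cfg_derives t r -> cfg_derives s r.

Definition cfg_lang (T : Type) (G : CFG T) (w : seq T) : Prop :=
  @cfg_derives T G [:: inl (cfg_start G)] (map inr w).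

Definition context_free (T : finType) (L : seq T -> Prop) : Prop :=
  exists G : CFG T, forall w, cfg_lang G w <-> L w.

Definition meval (M : monoidT) (A : Type) (gen : A -> M) (w : seq A) : M :=
  foldr (fun a x => mop (gen a) x) (munit M) w.

Definition generates (M : monoidT) (A : Type) (gen : A -> M) : Prop :=
  forall x : M, exists w : seq A, meval gen w = x.

(* WP(M,A) = { u # v^rev : u = v in M }, over the alphabet option A,
   where Some a is the letter a and None is the new symbol # *)
Definition word_problem (M : monoidT) (A : Type) (gen : A -> M) (s : seq (option A)) : Prop :=
  exists u v : seq A, s = map Some u ++ None :: rev (map Some v) /\ meval gen u = meval gen v.

Definition UCF (M : monoidT) : Prop :=
  exists (A : finType) (gen : A -> M), generates gen /\ context_free (word_problem gen).

(* Main.v *)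
From Stdlib Require Import ClassicalEpsilon FunctionalExtensionality ProofIrrelevance Eqdep_dec.
Require Import Defs.
From mathcomp Require Import all_boot zify.
From Stdlib Require Import Lia.
Set Implicit Arguments. Unset Strict Implicit. Unset Printing Implicit Defensive.
Lemma inP (T : eqType) (x : T) s : x \in s <-> List.In x s.
Proof.
elim: s => [|y s IH] //=; rewrite in_cons; split.
- by case/orP => [/eqP->|/IH]; [left|right].
- by case=> [->|/IH->]; rewrite ?eqxx ?orbT.
Qed.

Section Gens.
Variables (V T : Type) (P : V -> seq T -> Prop).
Inductive gensP : seq (V + T) -> seq T -> Prop :=
| GensNil : gensP [::] [::]
| GensT t s w : gensP s w -> gensP (inr t :: s) (t :: w)
| GensV X s w1 w2 : P X w1 -> gensP s w2 -> gensP (inl X :: s) (w1 ++ w2).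

Lemma gensP_cat s1 s2 w : gensP (s1 ++ s2) w <->
  exists w1 w2, w = w1 ++ w2 /\ gensP s1 w1 /\ gensP s2 w2.
Proof.
split.
- elim: s1 w => [|x s1 IH] w /=.
  + move=> h; exists [::], w; split=> //; split=> //; constructor.
  + move=> h; inversion h; subst.
    * case: (IH _ H2) => w1 [w2 [-> [h1 h2]]]; exists (t :: w1), w2; split=> //; split=> //; by constructor.
    * case: (IH _ H3) => w1' [w2' [-> [h1 h2]]]; exists (w1 ++ w1'), w2'; rewrite catA; split=> //; split=> //; by constructor.
- case=> w1 [w2 [-> [h1 h2]]]; elim: h1 => {s1 w1} //= [t s u _ IH|X s u1 u2 g _ IH].
  + by constructor.
  + rewrite -catA; by constructor.
Qed.

Lemma gensP_terms (w : seq T) : gensP (map inr w) w.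
Proof. by elim: w => [|t w IH] /=; constructor. Qed.

Lemma gensP_terms_inv (w w' : seq T) : gensP (map inr w) w' -> w' = w.
Proof.
elim: w w' => [|t w IH] w' /= h; inversion h => //; subst; by rewrite (IH _ H2).
Qed.
End Gens.

Lemma gensP_mono V T (P Q : V -> seq T -> Prop) s w :
  (forall X u, P X u -> Q X u) -> gensP P s w -> gensP Q s w.
Proof. move=> PQ; elim=> *; constructor; auto. Qed.

Section Gen.
Variables (T : Type) (G : CFG T).

Fixpoint gen (n : nat) : cfg_V G -> seq T -> Prop :=
  match n with
  | 0 => fun _ _ => False
  | n.+1 => fun X w => exists rhs, List.In (X, rhs) (cfg_rules G) /\ gensP (gen n) rhs w
  end.

Definition genL X w := exists n, gen n X w.

Lemma gen_S n X w : gen n X w -> gen n.+1 X w.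
Proof.
elim: n X w => [|n IH] X w //= [rhs [h1 h2]]; exists rhs; split=> //.
exact: gensP_mono h2.
Qed.

Lemma gen_mono n n' X w : gen n X w -> n <= n' -> gen n' X w.
Proof.
move=> h /subnKC <-; elim: (n' - n) => [|k IH]; first by rewrite addn0.
by rewrite addnS; apply: gen_S.
Qed.

Lemma gensL s w : gensP genL s w -> exists n, gensP (gen n) s w.
Proof.
elim=> [|t s0 w0 _ [n IH]|X s0 w1 w2 [n1 g] _ [n2 IH]]; first by exists 0; constructor.
- by exists n; constructor.
- exists (maxn n1 n2); constructor.
  + apply: gen_mono g _; exact: leq_maxl.
  + apply: gensP_mono IH => X0 u h; apply: gen_mono h _; exact: leq_maxr.
Qed.

Lemma genL_rule X rhs w : List.In (X, rhs) (cfg_rules G) -> gensP genL rhs w -> genL X w.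
Proof. move=> hin /gensL [n h]; exists n.+1, rhs; split=> //. Qed.

Lemma genL_inv X w : genL X w -> exists rhs, List.In (X, rhs) (cfg_rules G) /\ gensP genL rhs w.
Proof.
case=> [[|n]] //= [rhs [h1 h2]]; exists rhs; split=> //.
apply: gensP_mono h2 => Y u h; by exists n.
Qed.

Lemma step_ctx u v s t : @cfg_step T G s t -> cfg_step (u ++ s ++ v) (u ++ t ++ v).
Proof.
case=> u' v' rhs X hin.
have -> : u ++ (u' ++ inl X :: v') ++ v = (u ++ u') ++ inl X :: (v' ++ v) by rewrite !catA -catA.
have -> : u ++ (u' ++ rhs ++ v') ++ v = (u ++ u') ++ rhs ++ (v' ++ v) by rewrite !catA.
by constructor.
Qed.

Lemma der_ctx u v s t : @cfg_derives T G s t -> cfg_derives (u ++ s ++ v) (u ++ t ++ v).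
Proof.
elim=> [s0|s0 t0 r st _ IH]; first by constructor.
apply: CfgTrans IH; exact: step_ctx.
Qed.

Lemma der_trans s t r : @cfg_derives T G s t -> cfg_derives t r -> cfg_derives s r.
Proof. elim=> // s0 t0 r0 st _ IH h; apply: CfgTrans st _; exact: IH. Qed.

Lemma gens_der n s w : gensP (gen n) s w -> cfg_derives s (map inr w).
Proof.
elim: n s w => [|n IH] s w.
- elim=> [|t s0 w0 _ IH|X s0 w1 w2 g _ IH]; first by constructor.
  + by have := der_ctx [:: inr t] [::] IH; rewrite /= !cats0.
  + by [].
- elim=> [|t s0 w0 _ IH'|X s0 w1 w2 g _ IH']; first by constructor.
  + by have := der_ctx [:: inr t] [::] IH'; rewrite /= !cats0.
  + case: g => rhs [hin hg].
    rewrite map_cat; apply: (@der_trans _ (map inr w1 ++ s0)).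
    * apply: (@CfgTrans _ _ _ (rhs ++ s0)); first by have := @CfgStep _ G [::] s0 rhs X hin.
      by have := der_ctx [::] s0 (IH _ _ hg).
    * by have := der_ctx (map inr w1) [::] IH'; rewrite !cats0.
Qed.

Lemma der_gens s w : cfg_derives s (map inr w) -> gensP genL s w.
Proof.
move Ew: (map inr w) => t h; elim: h w Ew => [s0|s0 t0 r st _ IH] w Ew.
- by subst; apply: gensP_terms.
- case: st IH => u v rhs X hin IH.
  case/gensP_cat: (IH _ Ew) => w1 [w2 [-> [h1 /gensP_cat [w3 [w4 [-> [h3 h4]]]]]]].
  apply/gensP_cat; exists w1, (w3 ++ w4); split=> //; split=> //.
  rewrite -cat1s; apply/gensP_cat; exists w3, w4; split=> //; split=> //.
  rewrite -(cats0 w3); constructor; last by constructor.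
  exact: genL_rule hin h3.
Qed.

Lemma lang_gen w : cfg_lang G w <-> genL (cfg_start G) w.
Proof.
split.
- move/der_gens => h; inversion h; subst; inversion H3; subst; by rewrite cats0.
- case=> n h; apply: (@gens_der n.+1); rewrite -(cats0 w); constructor; last by constructor.
  exact: gen_S.
Qed.
End Gen.
Arguments genL {T} G X w.
Arguments gen {T} G n _ _.

Lemma cf_genL (T : finType) (L : seq T -> Prop) :
  context_free L <-> exists G : CFG T, forall w, genL G (cfg_start G) w <-> L w.
Proof.
split; case=> G h; exists G => w; rewrite -h; [symmetry|]; exact: (@lang_gen _ G w).
Qed.

Lemma cf_ext (T : finType) (L1 L2 : seq T -> Prop) :
  (forall w, L1 w <-> L2 w) -> context_free L1 -> context_free L2.
Proof. move=> e [G h]; exists G => w; rewrite h; exact: e. Qed.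
Lemma gensP_rev V T (P Q : V -> seq T -> Prop) s w :
  (forall X u, P X u -> Q X (rev u)) -> gensP P s w -> gensP Q (rev s) (rev w).
Proof.
move=> PQ; elim=> [|t s0 w0 _ IH|X s0 w1 w2 g _ IH]; first by constructor.
- rewrite !rev_cons -!cats1; apply/gensP_cat; exists (rev w0), [:: t]; split=> //; split=> //.
  by constructor; constructor.
- rewrite rev_cons rev_cat -cats1; apply/gensP_cat; exists (rev w2), (rev w1); split=> //; split=> //.
  rewrite -(cats0 (rev w1)); constructor; [exact: PQ|constructor].
Qed.

Section Rev.
Variables (T : finType) (G : CFG T).
Definition revG : CFG T :=
  {| cfg_V := cfg_V G; cfg_start := cfg_start G;
     cfg_rules := [seq (p.1, rev p.2) | p <- cfg_rules G] |}.

Lemma revG_sound n X w : gen G n X w -> genL revG X (rev w).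
Proof.
elim: n X w => [|n IH] X w //= [rhs [hin hg]].
apply: (@genL_rule _ revG _ (rev rhs)).
- by apply/inP; apply/mapP; exists (X, rhs) => //; apply/inP.
- exact: gensP_rev hg.
Qed.

Lemma revG_comp n X w : gen revG n X w -> genL G X (rev w).
Proof.
elim: n X w => [|n IH] X w //= [rhs [/inP /mapP [[Y s] /inP hin [-> ->]] hg]].
apply: (@genL_rule _ G _ s) => //.
by rewrite -[s]revK; apply: gensP_rev hg.
Qed.
End Rev.

Lemma cf_rev (T : finType) (L : seq T -> Prop) :
  context_free L -> context_free (fun w => L (rev w)).
Proof.
case/cf_genL=> G h; apply/cf_genL; exists (revG G) => w; rewrite -h; split.
- by case=> n /revG_comp.
- by rewrite -{2}(revK w); case=> n /revG_sound.
Qed.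

Section Words.
Variables (T : finType) (ws : seq (seq T)).
Definition wordsG : CFG T :=
  {| cfg_V := unit; cfg_start := tt; cfg_rules := [seq (tt, map inr w) | w <- ws] |}.
Lemma cf_words : context_free (fun w => w \in ws).
Proof.
apply/cf_genL; exists wordsG => w; split.
- case/genL_inv=> rhs [/inP /mapP [w' hw [->]]] /gensP_terms_inv -> //.
- move=> hw; apply: (@genL_rule _ wordsG _ (map inr w)).
  + by apply/inP; apply/mapP; exists w.
  + exact: gensP_terms.
Qed.
End Words.
Section NT.
Variables (T1 T2 Q : finType) (tr : Q -> T1 -> seq (Q * seq T2)).

Inductive runs : Q -> seq T1 -> seq T2 -> Q -> Prop :=
| RNil q : runs q [::] [::] q
| RCons q t k q' o w q'' : (q', o) \in tr q t -> runs q' k w q'' -> runs q (t :: k) (o ++ w) q''.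

Lemma runs_nil q w q' : runs q [::] w q' -> w = [::] /\ q' = q.
Proof. by move=> h; inversion h. Qed.

Lemma runs_cons q t k w q'' : runs q (t :: k) w q'' ->
  exists q' o w', (q', o) \in tr q t /\ runs q' k w' q'' /\ w = o ++ w'.
Proof. move=> h; inversion h; subst; by exists q', o, w0. Qed.

Lemma runs_cat q k1 k2 w q'' : runs q (k1 ++ k2) w q'' <->
  exists q' w1 w2, w = w1 ++ w2 /\ runs q k1 w1 q' /\ runs q' k2 w2 q''.
Proof.
split.
- elim: k1 q w => [|t k1 IH] q w /=.
  + move=> h; exists q, [::], w; split=> //; split=> //; constructor.
  + case/runs_cons=> q1 [o [w' [ho [/IH [q2 [w1 [w2 [-> [h1 h2]]]]] ->]]]].
    exists q2, (o ++ w1), w2; rewrite catA; split=> //; split=> //; by econstructor; eauto.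
- case=> q' [w1 [w2 [-> [h1 h2]]]]; elim: h1 h2 => {q k1 w1 q'} [q|q t k q1 o u q2 ht _ IH] h2 //=.
  rewrite -catA; econstructor; eauto.
Qed.

Variables (G : CFG T1) (q0 : Q) (acc : pred Q).
Notation V := (cfg_V G).
Definition ntV : finType := option (Q * V * Q).

Fixpoint lab (q : Q) (s : seq (V + T1)) : seq (Q * seq (ntV + T2)) :=
  match s with
  | [::] => [:: (q, [::])]
  | inr t :: s' => flatten [seq [seq (x.1, map inr qo.2 ++ x.2) | x <- lab qo.1 s'] | qo <- tr q t]
  | inl Y :: s' => flatten [seq [seq (x.1, inl (Some (q, Y, q')) :: x.2) | x <- lab q' s'] | q' <- enum Q]
  end.

Inductive lab_rel : Q -> seq (V + T1) -> Q -> seq (ntV + T2) -> Prop :=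
| LNil q : lab_rel q [::] q [::]
| LT q t s q1 o q' r : (q1, o) \in tr q t -> lab_rel q1 s q' r -> lab_rel q (inr t :: s) q' (map inr o ++ r)
| LV q Y s q1 q' r : lab_rel q1 s q' r -> lab_rel q (inl Y :: s) q' (inl (Some (q, Y, q1)) :: r).

Lemma lab_relP q s q' r : lab_rel q s q' r <-> (q', r) \in lab q s.
Proof.
split.
- elim=> {q s q' r} [q|q t s q1 o q' r h _ IH|q Y s q1 q' r _ IH] /=.
  + by rewrite inE.
  + apply/flatten_mapP; exists (q1, o) => //; apply/mapP; by exists (q', r).
  + apply/flatten_mapP; exists q1; first by rewrite mem_enum.
    apply/mapP; by exists (q', r).
- elim: s q q' r => [|[Y|t] s IH] q q' r /=.
  + by rewrite inE => /eqP [-> ->]; constructor.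
  + case/flatten_mapP=> q1 _ /mapP [[q2 r2] h [-> ->]]; constructor; exact: IH.
  + case/flatten_mapP=> [[q1 o] ho /mapP [[q2 r2] h [-> ->]]]; econstructor; eauto.
Qed.

Definition ntRules : seq (ntV * seq (ntV + T2)) :=
  [seq (None, [:: inl (Some (q0, cfg_start G, q))]) | q <- enum Q & acc q] ++
  flatten [seq flatten [seq [seq (Some (q, p.1, x.1), x.2) | x <- lab q p.2] | q <- enum Q]
          | p <- cfg_rules G].

Definition ntG : CFG T2 := {| cfg_V := ntV; cfg_start := None; cfg_rules := ntRules |}.

Definition ntsem (Z : ntV) (w : seq T2) : Prop :=
  match Z with
  | None => exists k q, genL G (cfg_start G) k /\ runs q0 k w q /\ acc q
  | Some (q, X, q') => exists k, genL G X k /\ runs q k w q'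
  end.

Lemma lab_sound q s q' r w : lab_rel q s q' r -> gensP ntsem r w ->
  exists k, gensP (genL G) s k /\ runs q k w q'.
Proof.
move=> h; elim: h w => {q s q' r} [q|q t s q1 o q' r ho _ IH|q Y s q1 q' r _ IH] w.
- move=> h; inversion h; exists [::]; split; constructor.
- case/gensP_cat=> w1 [w2 [-> [/gensP_terms_inv -> /IH [k [hk hr]]]]].
  exists (t :: k); split; [by constructor|econstructor; eauto].
- move=> h; inversion h; subst.
  case: H1 => k1 [hk1 hr1]; case: (IH _ H3) => k2 [hk2 hr2].
  exists (k1 ++ k2); split; first by constructor.
  apply/runs_cat; exists q1, w1, w2; split=> //.
Qed.

Lemma nt_sound n Z w : gen ntG n Z w -> ntsem Z w.
Proof.
elim: n Z w => [|n IH] Z w //= [rhs [/inP hin hg]].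
have hg' : gensP ntsem rhs w by apply: gensP_mono hg => Y u; apply: IH.
move: hin; rewrite mem_cat => /orP [].
- case/mapP=> q; rewrite mem_filter => /andP [hq _] [-> Er]; subst rhs.
  inversion hg'; subst; inversion H3; subst; rewrite cats0.
  case: H1 => k [hk hr]; by exists k, q.
- case/flatten_mapP=> [[X s] /inP hX /flatten_mapP [q _ /mapP [[qe r] /lab_relP hl [-> Er]]]]; subst rhs.
  case: (lab_sound hl hg') => k [hk hr]; exists k; split=> //.
  exact: genL_rule hX hk.
Qed.

Lemma lab_comp s k : gensP (fun Y k' => forall q w q', runs q k' w q' -> genL ntG (Some (q, Y, q')) w) s k ->
  forall q w q', runs q k w q' -> exists r, lab_rel q s q' r /\ gensP (genL ntG) r w.
Proof.
elim=> {s k} [|t s k _ IH|Y s k1 k2 g _ IH] q w q' hr.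
- case/runs_nil: hr => -> ->; exists [::]; split; constructor.
- case/runs_cons: hr => q1 [o [w' [ho [hr ->]]]]; case: (IH _ _ _ hr) => r [hl hg].
  exists (map inr o ++ r); split; first by econstructor; eauto.
  apply/gensP_cat; exists o, w'; split=> //; split=> //; exact: gensP_terms.
- case/runs_cat: hr => q1 [w1 [w2 [-> [h1 h2]]]].
  case: (IH _ _ _ h2) => r [hl hg]; exists (inl (Some (q, Y, q1)) :: r); split; by constructor; auto.
Qed.

Lemma nt_comp n X k : gen G n X k -> forall q w q', runs q k w q' -> genL ntG (Some (q, X, q')) w.
Proof.
elim: n X k => [|n IH] X k //= [rhs [hin hg]] q w q' hr.
have hg' := gensP_mono (fun Y k' h => IH Y k' h) hg.
case: (lab_comp hg' hr) => r [hl hr'].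
apply: (@genL_rule _ ntG _ r) => //.
apply/inP; rewrite /= /ntRules mem_cat; apply/orP; right.
apply/flatten_mapP; exists (X, rhs); first by apply/inP.
apply/flatten_mapP; exists q; first by rewrite mem_enum.
apply/mapP; exists (q', r) => //; exact/lab_relP.
Qed.
End NT.

Lemma cf_ntrans (T1 T2 Q : finType) (tr : Q -> T1 -> seq (Q * seq T2)) (q0 : Q) (acc : pred Q)
  (L : seq T1 -> Prop) : context_free L ->
  context_free (fun w => exists k q, L k /\ runs tr q0 k w q /\ acc q).
Proof.
case/cf_genL=> G h; apply/cf_genL; exists (ntG tr G q0 acc) => w; split.
- case=> n /nt_sound /= [k [q [hk [hr ha]]]]; exists k, q; split=> //; exact/h.
- case=> k [q [/h [n hk] [hr ha]]].
  have hg := nt_comp q0 acc hk hr.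
  apply: (@genL_rule _ (ntG tr G q0 acc) _ [:: inl (Some (q0, cfg_start G, q))]).
  + apply/inP; rewrite /= /ntRules mem_cat; apply/orP; left.
    apply/mapP; exists q => //; by rewrite mem_filter ha mem_enum.
  + rewrite -(cats0 w); constructor=> //; constructor.
Qed.
Section Fills.
Variables (T J : Type).
Inductive fills (P : J -> seq T -> Prop) : seq (T + J) -> seq T -> Prop :=
| FNil : fills P [::] [::]
| FT t k w : fills P k w -> fills P (inl t :: k) (t :: w)
| FJ j k w1 w2 : P j w1 -> fills P k w2 -> fills P (inr j :: k) (w1 ++ w2).

Lemma fills_mono (P Q : J -> seq T -> Prop) k w :
  (forall j u, P j u -> Q j u) -> fills P k w -> fills Q k w.
Proof. move=> PQ; elim=> *; constructor; auto. Qed.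

Lemma fills_cat P k1 k2 w : fills P (k1 ++ k2) w <->
  exists w1 w2, w = w1 ++ w2 /\ fills P k1 w1 /\ fills P k2 w2.
Proof.
split.
- elim: k1 w => [|x k1 IH] w /=.
  + move=> h; exists [::], w; split=> //; split=> //; constructor.
  + move=> h; inversion h; subst.
    * case: (IH _ H2) => w1 [w2 [-> [h1 h2]]]; exists (t :: w1), w2; split=> //; split=> //; by constructor.
    * case: (IH _ H3) => w1' [w2' [-> [h1 h2]]]; exists (w1 ++ w1'), w2'; rewrite catA; split=> //; split=> //; by constructor.
- case=> w1 [w2 [-> [h1 h2]]]; elim: h1 => {k1 w1} //= [t s u _ IH|j s u1 u2 g _ IH].
  + by constructor.
  + rewrite -catA; by constructor.
Qed.

Lemma fills_terms P (x : seq T) w : fills P (map inl x) w <-> w = x.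
Proof.
split.
- elim: x w => [|t x IH] w /= h; inversion h => //; subst; by rewrite (IH _ H2).
- move->; elim: x => [|t x IH] /=; by constructor.
Qed.

Lemma fills_nil P w : fills P [::] w -> w = [::].
Proof. by move=> h; inversion h. Qed.
Lemma fills_consT P t k w : fills P (inl t :: k) w -> exists w', w = t :: w' /\ fills P k w'.
Proof. by move=> h; inversion h; subst; exists w0. Qed.
Lemma fills_consJ P j k w : fills P (inr j :: k) w -> exists w1 w2, w = w1 ++ w2 /\ P j w1 /\ fills P k w2.
Proof. by move=> h; inversion h; subst; exists w1, w2. Qed.

Definition lfp (K : J -> seq (T + J) -> Prop) (j : J) (w : seq T) : Prop :=
  forall Pj : J -> seq T -> Prop,
    (forall j k w, K j k -> fills Pj k w -> Pj j w) -> Pj j w.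

Lemma lfp_closed K j k w : K j k -> fills (lfp K) k w -> lfp K j w.
Proof.
move=> hk hf Pj cl; apply: (cl _ _ _ hk); apply: fills_mono hf => j' u h; exact: (h Pj cl).
Qed.

Lemma lfp_char K j w : lfp K j w <-> exists k, K j k /\ fills (lfp K) k w.
Proof.
split; last by case=> k [hk hf]; exact: lfp_closed hk hf.
move=> h; apply: (h (fun j w => exists k, K j k /\ fills (lfp K) k w)) => j' k w' hk hf; exists k; split=> //.
apply: fills_mono hf => j'' u [k' [hk' hf']]; exact: lfp_closed hk' hf'.
Qed.

Lemma lfp_fixed K j (L : seq T -> Prop) :
  (forall k, K j k <-> exists x, L x /\ k = map inl x) -> forall w, lfp K j w <-> L w.
Proof.
move=> hK w; rewrite lfp_char; split.
- by case=> k [/hK [x [hx ->]] /fills_terms ->].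
- move=> hw; exists (map inl w); split; [apply/hK; by exists w|exact/fills_terms].
Qed.
End Fills.

Section Sys.
Variables (T J : finType) (G : J -> CFG (T + J)).
Definition sysV : finType := {j : J & cfg_V (G j)}.
Definition tg j (X : cfg_V (G j)) : sysV := Tagged (fun j => cfg_V (G j)) X.
Definition conv j (x : cfg_V (G j) + (T + J)) : sysV + T :=
  match x with
  | inl X => inl (tg X)
  | inr (inl t) => inr t
  | inr (inr j') => inl (tg (cfg_start (G j')))
  end.
Definition sysRules : seq (sysV * seq (sysV + T)) :=
  flatten [seq [seq (tg p.1, map (@conv j) p.2) | p <- cfg_rules (G j)] | j <- enum J].
Definition sysG (j0 : J) : CFG T :=
  {| cfg_V := sysV; cfg_start := tg (cfg_start (G j0)); cfg_rules := sysRules |}.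

Variable j0 : J.
Definition D j w := genL (sysG j0) (tg (cfg_start (G j))) w.

Lemma sys_sound (Pj : J -> seq T -> Prop) :
  (forall j k w, genL (G j) (cfg_start (G j)) k -> fills Pj k w -> Pj j w) ->
  forall n Z w, gen (sysG j0) n Z w ->
    exists k, genL (G (tag Z)) (tagged Z) k /\ fills Pj k w.
Proof.
move=> cl; elim=> [|n IH] Z w //= [r [/inP hin hg]].
have hg' := gensP_mono (fun Y u h => IH Y u h) hg.
case/flatten_mapP: hin => j _ /mapP [[X s] /inP hX [EZ Er]]; subst Z r => /=.
suff : exists k, gensP (genL (G j)) s k /\ fills Pj k w.
  by case=> k [hk hf]; exists k; split=> //; exact: genL_rule hX hk.
elim: s w hg' {hX hg} => [|[X'|[t|j']] s IHs] w /= h.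
- inversion h; exists [::]; split; constructor.
- inversion h; subst. case: H1 => k1 [hk1 hf1]; case: (IHs _ H3) => k2 [hk2 hf2].
  exists (k1 ++ k2); split; first by constructor.
  apply/fills_cat; by exists w1, w2.
- inversion h; subst; case: (IHs _ H2) => k2 [hk2 hf2].
  exists (inl t :: k2); split; by constructor.
- inversion h; subst. case: H1 => k1 [hk1 hf1]; case: (IHs _ H3) => k2 [hk2 hf2].
  exists (inr j' :: k2); split; first by constructor.
  constructor=> //; exact: cl hk1 hf1.
Qed.

Lemma sys_comp n j X k : gen (G j) n X k -> forall w, fills D k w -> genL (sysG j0) (tg X) w.
Proof.
elim: n j X k => [|n IH] j X k //= [s [hin hg]] w hf.
apply: (@genL_rule _ (sysG j0) _ (map (@conv j) s)).
  apply/inP; apply/flatten_mapP; exists j; first by rewrite mem_enum.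
  by apply/mapP; exists (X, s) => //; apply/inP.
elim: hg w hf {hin} => {s k} [|t s k _ IHs|X' s k1 k2 g _ IHs] w hf /=.
- rewrite (fills_nil hf); constructor.
- case: t hf => [t|j'] hf.
  + case: (fills_consT hf) => w' [-> hf']; constructor; exact: IHs.
  + case: (fills_consJ hf) => w1 [w2 [-> [h1 h2]]]; constructor=> //; exact: IHs.
- case/fills_cat: hf => w1 [w2 [-> [h1 h2]]]; constructor; [exact: IH g _ h1|exact: IHs].
Qed.
End Sys.

Lemma cf_lfp (T J : finType) (K : J -> seq (T + J) -> Prop) :
  (forall j, context_free (K j)) -> forall j, context_free (lfp K j).
Proof.
move=> hK j0.
have hG : forall j, { G : CFG (T + J) | forall w, genL G (cfg_start G) w <-> K j w }.
  move=> j; apply: constructive_indefinite_description; exact/cf_genL.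
pose G j := proj1_sig (hG j).
have GK : forall j w, genL (G j) (cfg_start (G j)) w <-> K j w by move=> j; exact: (proj2_sig (hG j)).
apply/cf_genL; exists (sysG G j0) => w; split.
- case=> n h; have := sys_sound (j0 := j0) (Pj := lfp K) _ h; case.
  + move=> j k u /GK hk hf; exact: lfp_closed hk hf.
  + move=> k [/= /GK hk hf]; exact: lfp_closed hk hf.
- move=> h; apply: (h (D G j0)) => j k u /GK [n hk] hf.
  exact: sys_comp hk _ hf.
Qed.
Lemma meval_cat (M : monoidT) (A : Type) (g : A -> M) u v :
  meval g (u ++ v) = mop (meval g u) (meval g v).
Proof. elim: u => [|a u IH] /=; first by rewrite munitl. by rewrite IH massoc. Qed.

Lemma hom_meval (M N : monoidT) (f : M -> N) (A : Type) (g : A -> M) u :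
  is_hom f -> f (meval g u) = meval (fun a => f (g a)) u.
Proof. case=> h1 h2; elim: u => [|a u IH] //=; by rewrite h2 IH. Qed.

Lemma meval_map (M : monoidT) (A B : Type) (g : B -> M) (f : A -> B) u :
  meval g (map f u) = meval (fun a => g (f a)) u.
Proof. by elim: u => [|a u IH] //=; rewrite IH. Qed.

Definition isone (M : monoidT) (x : M) : bool :=
  if excluded_middle_informative (x = munit M) then true else false.
Lemma isoneP (M : monoidT) (x : M) : reflect (x = munit M) (isone x).
Proof. rewrite /isone; case: excluded_middle_informative => h; by constructor. Qed.

Lemma sig_eq (T : Type) (P : T -> Prop) (x y : {t | P t}) : proj1_sig x = proj1_sig y -> x = y.
Proof.
case: x y => x px [y py] /= e; subst y; by rewrite (proof_irrelevance _ px py).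
Qed.

Section FP.
Variables (M N P : monoidT) (iM : M -> P) (iN : N -> P).
Hypothesis H : is_free_product iM iN.

Lemma fp_sym : is_free_product iN iM.
Proof.
case: H => h1 [h2 U]; split=> //; split=> // Q f g hf hg.
case: (U Q g f hg hf) => [[h [hh [e1 e2]]] uniq]; split; first by exists h.
move=> k1 k2 hk1 hk2 a1 a2 a3 a4; exact: (uniq k1 k2).
Qed.

Lemma hom_id (Q : monoidT) : is_hom (fun x : Q => x).
Proof. by []. Qed.

Lemma hom_one (Q R : monoidT) : is_hom (fun _ : Q => munit R).
Proof. by split=> // x y; rewrite munitl. Qed.

Lemma retract : exists r : P -> M, is_hom r /\ (forall m, r (iM m) = m) /\ (forall n, r (iN n) = munit M).
Proof.
case: H => _ [_ U]; case: (U M (fun x => x) (fun _ => munit M) (hom_id M) (hom_one N M)) => [[r [hr [e1 e2]]] _].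
by exists r.
Qed.

Lemma iM_inj x y : iM x = iM y -> x = y.
Proof. case: retract => r [_ [e _]] h; by rewrite -(e x) -(e y) h. Qed.

Section Gen.
Variables (A B : Type) (gA : A -> M) (gB : B -> N).
Definition gP (c : A + B) : P := match c with inl a => iM (gA a) | inr b => iN (gB b) end.

Definition subC := {p : P | exists w, meval gP w = p}.
Definition subop (x y : subC) : subC.
exists (mop (proj1_sig x) (proj1_sig y)).
case: x y => x [u hu] [y [v hv]] /=; exists (u ++ v); by rewrite meval_cat hu hv.
Defined.
Definition subunit : subC := exist _ (munit P) (ex_intro _ [::] erefl).
Definition subM : monoidT.
refine {| mcar := subC; mop := subop; munit := subunit |}.
- move=> x y z; apply: sig_eq => /=; exact: massoc.
- move=> x; apply: sig_eq => /=; exact: munitl.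
- move=> x; apply: sig_eq => /=; exact: munitr.
Defined.

Hypothesis genA : generates gA.
Hypothesis genB : generates gB.

Lemma gP_generates : generates gP.
Proof.
case: H => hM [hN U].
have fM : forall m : M, exists w, meval gP w = iM m.
  move=> m; case: (genA m) => u <-; exists (map inl u).
  rewrite meval_map (hom_meval _ _ hM) //.
have fN : forall n : N, exists w, meval gP w = iN n.
  move=> n; case: (genB n) => u <-; exists (map inr u).
  rewrite meval_map (hom_meval _ _ hN) //.
pose f (m : M) : subM := exist _ (iM m) (fM m).
pose g (n : N) : subM := exist _ (iN n) (fN n).
have hf : is_hom f.
  split; first by apply: sig_eq => /=; case: hM.
  by move=> x y; apply: sig_eq => /=; case: hM.
have hg : is_hom g.
  split; first by apply: sig_eq => /=; case: hN.
  by move=> x y; apply: sig_eq => /=; case: hN.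
case: (U subM f g hf hg) => [[h [hh [e1 e2]]] _].
case: (U P iM iN hM hN) => _ uniq.
have hv : is_hom (fun p => proj1_sig (h p)).
  case: hh => h1 h2; split; first by rewrite h1.
  by move=> x y; rewrite h2.
have u1 : forall x, proj1_sig (h (iM x)) = iM x by move=> x; rewrite e1.
have u2 : forall y, proj1_sig (h (iN y)) = iN y by move=> y; rewrite e2.
move=> p; have := uniq _ _ hv (hom_id P) u1 u2 (fun _ => erefl) (fun _ => erefl) p.
move=> <-; exact: (proj2_sig (h p)).
Qed.
End Gen.
End FP.
Section Act.
Variables (M N : monoidT).
Definition side (x : M + N) : bool := if x is inl _ then true else false.
Fixpoint reduced (r : seq (M + N)) : Prop :=
  match r with
  | [::] => True
  | x :: r' => (match x with inl m => m <> munit M | inr n => n <> munit N end) /\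
               (match r' with y :: _ => side x <> side y | [::] => True end) /\ reduced r'
  end.
Definition actM (m : M) (r : seq (M + N)) : seq (M + N) :=
  match r with
  | inl m1 :: r' => if isone (mop m m1) then r' else inl (mop m m1) :: r'
  | _ => if isone m then r else inl m :: r
  end.
Definition actN (n : N) (r : seq (M + N)) : seq (M + N) :=
  match r with
  | inr n1 :: r' => if isone (mop n n1) then r' else inr (mop n n1) :: r'
  | _ => if isone n then r else inr n :: r
  end.

Lemma actM_red m r : reduced r -> reduced (actM m r).
Proof.
case: r => [|[m1|n1] r'] /=.
- by case: isoneP.
- case=> [h1 [h2 h3]]; case: isoneP => h //=; split=> //; split=> //.
- case=> [h1 [h2 h3]]; case: isoneP => h //=.
Qed.

Lemma actN_red n r : reduced r -> reduced (actN n r).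
Proof.
case: r => [|[m1|n1] r'] /=.
- by case: isoneP.
- case=> [h1 [h2 h3]]; case: isoneP => h //=.
- case=> [h1 [h2 h3]]; case: isoneP => h //=; split=> //; split=> //.
Qed.

Lemma actM_one r : reduced r -> actM (munit M) r = r.
Proof.
case: r => [|[m1|n1] r'] /=; try by case: isoneP.
rewrite munitl; case=> h1 _; by case: isoneP.
Qed.

Lemma actN_one r : reduced r -> actN (munit N) r = r.
Proof.
case: r => [|[m1|n1] r'] /=; try by case: isoneP.
rewrite munitl; case=> h1 _; by case: isoneP.
Qed.

Lemma actM_mul m m' r : reduced r -> actM (mop m m') r = actM m (actM m' r).
Proof.
case: r => [|[m1|n1] r'] /=.
- case: (isoneP m') => [->|_]; by rewrite ?munitr.
- case=> _ [h2 _]; rewrite -massoc; case: (isoneP (mop m' m1)) => [->|//].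
  rewrite munitr; by case: r' h2 => [|[?|?] ?].
- move=> _; case: (isoneP m') => [->|_]; by rewrite ?munitr.
Qed.

Lemma actN_mul n n' r : reduced r -> actN (mop n n') r = actN n (actN n' r).
Proof.
case: r => [|[m1|n1] r'] /=.
- case: (isoneP n') => [->|_]; by rewrite ?munitr.
- move=> _; case: (isoneP n') => [->|_]; by rewrite ?munitr.
- case=> _ [h2 _]; rewrite -massoc; case: (isoneP (mop n' n1)) => [->|//].
  rewrite munitr; by case: r' h2 => [|[?|?] ?].
Qed.

Definition RX := {r : seq (M + N) | reduced r}.
Definition actMon : monoidT.
refine {| mcar := RX -> RX; mop := fun f g r => f (g r); munit := fun r => r |}; by [].
Defined.
Definition fM (m : M) : actMon := fun r => exist _ (actM m (proj1_sig r)) (actM_red m (proj2_sig r)).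
Definition fN (n : N) : actMon := fun r => exist _ (actN n (proj1_sig r)) (actN_red n (proj2_sig r)).
Lemma fM_hom : is_hom fM.
Proof.
split.
- apply: functional_extensionality => r; apply: sig_eq => /=; exact: actM_one (proj2_sig r).
- move=> x y; apply: functional_extensionality => r; apply: sig_eq => /=; exact: actM_mul (proj2_sig r).
Qed.
Lemma fN_hom : is_hom fN.
Proof.
split.
- apply: functional_extensionality => r; apply: sig_eq => /=; exact: actN_one (proj2_sig r).
- move=> x y; apply: functional_extensionality => r; apply: sig_eq => /=; exact: actN_mul (proj2_sig r).
Qed.
End Act.

Section WPfp.
Variables (M N P : monoidT) (iM : M -> P) (iN : N -> P).
Hypothesis H : is_free_product iM iN.
Variables (A B : finType) (gA : A -> M) (gB : B -> N).
Notation C := (A + B)%type.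
Local Notation gP := (gP iM iN gA gB).

Definition actC (c : C) (r : seq (M + N)) : seq (M + N) :=
  match c with inl a => actM (gA a) r | inr b => actN (gB b) r end.
Definition red (w : seq C) := foldr actC [::] w.

Lemma red_eq u v : meval gP u = meval gP v -> red u = red v.
Proof.
case: H => hM [hN U].
case: (U (actMon M N) (@fM M N) (@fN M N) (@fM_hom M N) (@fN_hom M N)) => [[h [hh [e1 e2]]] _].
have key : forall w (r : RX M N), proj1_sig (h (meval gP w) r) = foldr actC (proj1_sig r) w.
  elim=> [|c w IH] r /=; first by case: hh => -> _.
  case: hh => _ ->; rewrite /= -IH; case: c => [a|b] /=; by rewrite ?e1 ?e2.
move=> e; have ku := key u (exist _ [::] I); have kv := key v (exist _ [::] I).
simpl in ku, kv; by rewrite /red -ku -kv e.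
Qed.

Definition blk (X : Type) (emb : X -> C) (ps : seq (X * seq C)) : seq C :=
  flatten [seq emb p.1 :: p.2 | p <- ps].

Inductive Ttl : seq C -> Prop :=
| Tnil : Ttl [::]
| Tcat x y : Ttl x -> Ttl y -> Ttl (x ++ y)
| TM (ps : seq (A * seq C)) : (forall p, List.In p ps -> Ttl p.2) ->
    meval gA (map fst ps) = munit M -> Ttl (blk (@inl A B) ps)
| TN (ps : seq (B * seq C)) : (forall p, List.In p ps -> Ttl p.2) ->
    meval gB (map fst ps) = munit N -> Ttl (blk (@inr A B) ps).

Lemma blk_eval (X : Type) (emb : X -> C) (Mx : monoidT) (g : X -> Mx) (j : Mx -> P) ps :
  is_hom j -> (forall x, gP (emb x) = j (g x)) -> (forall p, List.In p ps -> meval gP p.2 = munit P) ->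
  meval gP (blk emb ps) = j (meval g (map fst ps)).
Proof.
move=> [j1 j2] he; elim: ps => [|p ps IH] hp //=.
rewrite meval_cat /= hp /=; last by left.
rewrite munitl IH; last by move=> q hq; apply: hp; right.
by rewrite he j2.
Qed.

Lemma Ttl_sound x : Ttl x -> meval gP x = munit P.
Proof.
case: H => hM [hN _].
elim=> [|x0 y _ IHx _ IHy|ps _ IH e|ps _ IH e] //.
- by rewrite meval_cat IHx IHy munitl.
- rewrite (blk_eval (g := gA) hM) //; first by rewrite e; case: hM.
- rewrite (blk_eval (g := gB) hN) //; first by rewrite e; case: hN.
Qed.

Inductive Dl : seq (option C) -> Prop :=
| Dhash : Dl [:: None]
| Dins x y s : Ttl x -> Ttl y -> Dl s -> Dl (map Some x ++ s ++ map Some (rev y))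
| DM (ps qs : seq (A * seq C)) s : (forall p, List.In p ps -> Ttl p.2) -> (forall p, List.In p qs -> Ttl p.2) ->
    meval gA (map fst ps) = meval gA (map fst qs) -> Dl s ->
    Dl (map Some (blk (@inl A B) ps) ++ s ++ rev (map Some (blk (@inl A B) qs)))
| DN (ps qs : seq (B * seq C)) s : (forall p, List.In p ps -> Ttl p.2) -> (forall p, List.In p qs -> Ttl p.2) ->
    meval gB (map fst ps) = meval gB (map fst qs) -> Dl s ->
    Dl (map Some (blk (@inr A B) ps) ++ s ++ rev (map Some (blk (@inr A B) qs))).

Lemma shape_cat (x y u v : seq C) :
  map Some x ++ (map Some u ++ None :: rev (map Some v)) ++ rev (map Some y) =
  map Some (x ++ u) ++ None :: rev (map Some (y ++ v)).
Proof. by rewrite !map_cat rev_cat -!catA /=. Qed.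

Lemma Dl_sound s : Dl s -> exists u v, s = map Some u ++ None :: rev (map Some v) /\ meval gP u = meval gP v.
Proof.
case: (H) => hM [hN _].
have TE : forall qs : seq (A * seq C), (forall p, List.In p qs -> Ttl p.2) ->
   forall p, List.In p qs -> meval gP p.2 = munit P by move=> qs h p /h /Ttl_sound.
have TE' : forall qs : seq (B * seq C), (forall p, List.In p qs -> Ttl p.2) ->
   forall p, List.In p qs -> meval gP p.2 = munit P by move=> qs h p /h /Ttl_sound.
elim=> [|x y s0 hx hy _ [u [v [-> e]]]|ps qs s0 hp hq e _ [u [v [-> e']]]|ps qs s0 hp hq e _ [u [v [-> e']]]].
- by exists [::], [::].
- exists (x ++ u), (y ++ v); rewrite map_rev shape_cat; split=> //.
  by rewrite !meval_cat (Ttl_sound hx) (Ttl_sound hy) e.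
- exists (blk inl ps ++ u), (blk inl qs ++ v); rewrite shape_cat; split=> //.
  rewrite !meval_cat (blk_eval (g := gA) hM _ (TE _ hp)) // (blk_eval (g := gA) hM _ (TE _ hq)) //.
  by rewrite e e'.
- exists (blk inr ps ++ u), (blk inr qs ++ v); rewrite shape_cat; split=> //.
  rewrite !meval_cat (blk_eval (g := gB) hN _ (TE' _ hp)) // (blk_eval (g := gB) hN _ (TE' _ hq)) //.
  by rewrite e e'.
Qed.

Inductive Dec : seq C -> seq (M + N) -> Prop :=
| Dec0 z : Ttl z -> Dec z [::]
| DecM z (ps : seq (A * seq C)) w r m : Ttl z -> (forall p, List.In p ps -> Ttl p.2) -> Dec w r ->
    meval gA (map fst ps) = m -> Dec (z ++ blk (@inl A B) ps ++ w) (inl m :: r)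
| DecN z (ps : seq (B * seq C)) w r n : Ttl z -> (forall p, List.In p ps -> Ttl p.2) -> Dec w r ->
    meval gB (map fst ps) = n -> Dec (z ++ blk (@inr A B) ps ++ w) (inr n :: r).

Lemma Dec_pre z w r : Ttl z -> Dec w r -> Dec (z ++ w) r.
Proof.
move=> hz; case=> [z' h|z' ps w' r' m h1 h2 h3 h4|z' ps w' r' m h1 h2 h3 h4].
- constructor; exact: Tcat.
- rewrite catA; apply: DecM => //; exact: Tcat.
- rewrite catA; apply: DecN => //; exact: Tcat.
Qed.

Lemma Dec_red w : Dec w (red w).
Proof.
elim: w => [|c w IH] /=; first by constructor; constructor.
case: c => [a|b] /=.
- case: IH => [z hz|z ps w' r m hz hp hw <-|z ps w' r n hz hp hw <-] /=.
  + case: (isoneP (gA a)) => e.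
    * apply: (Dec_pre (z := [:: inl a])); last by constructor.
      apply: (TM (ps := [:: (a, [::])])) => //=; last by rewrite munitr.
      by move=> p [<-|//]; constructor.
    * apply: (DecM (z := [::]) (ps := [:: (a, [::])]) (w := z)) => //=; try constructor => //.
      -- by move=> p [<-|//]; constructor.
      -- by rewrite munitr.
  + have hp' : forall p, List.In p ((a, z) :: ps) -> Ttl p.2 by move=> p [<-|/hp].
    case: (isoneP (mop (gA a) (meval gA (map fst ps)))) => e.
    * have := Dec_pre (TM hp' e) hw; by rewrite /= -catA.
    * have := DecM Tnil hp' hw erefl; by rewrite /= -catA.
  + case: (isoneP (gA a)) => e.
    * apply: (Dec_pre (z := [:: inl a])); last by apply: DecN.
      apply: (TM (ps := [:: (a, [::])])) => //=; last by rewrite munitr.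
      by move=> p [<-|//]; constructor.
    * apply: (DecM (z := [::]) (ps := [:: (a, [::])])) => //=; first exact: Tnil.
      -- by move=> p [<-|//]; constructor.
      -- exact: DecN hz hp hw erefl.
      -- by rewrite munitr.
- case: IH => [z hz|z ps w' r m hz hp hw <-|z ps w' r n hz hp hw <-] /=.
  + case: (isoneP (gB b)) => e.
    * apply: (Dec_pre (z := [:: inr b])); last by constructor.
      apply: (TN (ps := [:: (b, [::])])) => //=; last by rewrite munitr.
      by move=> p [<-|//]; constructor.
    * apply: (DecN (z := [::]) (ps := [:: (b, [::])]) (w := z)) => //=; try constructor => //.
      -- by move=> p [<-|//]; constructor.
      -- by rewrite munitr.
  + case: (isoneP (gB b)) => e.
    * apply: (Dec_pre (z := [:: inr b])); last by apply: DecM.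
      apply: (TN (ps := [:: (b, [::])])) => //=; last by rewrite munitr.
      by move=> p [<-|//]; constructor.
    * apply: (DecN (z := [::]) (ps := [:: (b, [::])])) => //=; first exact: Tnil.
      -- by move=> p [<-|//]; constructor.
      -- exact: DecM hz hp hw erefl.
      -- by rewrite munitr.
  + have hp' : forall p, List.In p ((b, z) :: ps) -> Ttl p.2 by move=> p [<-|/hp].
    case: (isoneP (mop (gB b) (meval gB (map fst ps)))) => e.
    * have := Dec_pre (TN hp' e) hw; by rewrite /= -catA.
    * have := DecN Tnil hp' hw erefl; by rewrite /= -catA.
Qed.
Lemma Dec_nil_inv v : Dec v [::] -> Ttl v.
Proof. by move=> h; inversion h. Qed.

Lemma Dec_M_inv v m r : Dec v (inl m :: r) -> exists z ps w, v = z ++ blk (@inl A B) ps ++ w /\ Ttl z /\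
  (forall p, List.In p ps -> Ttl p.2) /\ Dec w r /\ meval gA (map fst ps) = m.
Proof. move=> h; inversion h; subst; by exists z, ps, w. Qed.

Lemma Dec_N_inv v n r : Dec v (inr n :: r) -> exists z ps w, v = z ++ blk (@inr A B) ps ++ w /\ Ttl z /\
  (forall p, List.In p ps -> Ttl p.2) /\ Dec w r /\ meval gB (map fst ps) = n.
Proof. move=> h; inversion h; subst; by exists z, ps, w. Qed.

Lemma Dec_Dl u r : Dec u r -> forall v, Dec v r -> Dl (map Some u ++ None :: rev (map Some v)).
Proof.
elim=> [z hz|z ps w r0 m hz hp _ IH e|z ps w r0 n hz hp _ IH e] v hv.
- have := Dins hz (Dec_nil_inv hv) Dhash; by rewrite map_rev.
- case: (Dec_M_inv hv) => z' [qs [w' [-> [hz' [hq [hw' e']]]]]].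
  have := DM hp hq (etrans e (esym e')) (IH _ hw'); rewrite shape_cat => h.
  have := Dins hz hz' h; by rewrite map_rev shape_cat.
- case: (Dec_N_inv hv) => z' [qs [w' [-> [hz' [hq [hw' e']]]]]].
  have := DN hp hq (etrans e (esym e')) (IH _ hw'); rewrite shape_cat => h.
  have := Dins hz hz' h; by rewrite map_rev shape_cat.
Qed.

Lemma Dl_complete u v : meval gP u = meval gP v -> Dl (map Some u ++ None :: rev (map Some v)).
Proof. move/red_eq => e; apply: (Dec_Dl (Dec_red u)); rewrite e; exact: Dec_red. Qed.

Lemma WP_Dl s : word_problem gP s <-> Dl s.
Proof.
split; first by case=> u [v [-> e]]; exact: Dl_complete.
by case/Dl_sound=> u [v [-> e]]; exists u, v.
Qed.
End WPfp.
Definition trHom (T1 T2 : Type) (f : T1 -> seq T2) (q : unit) (t : T1) : seq (unit * seq T2) :=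
  [:: (tt, f t)].

Lemma runs_hom (T1 T2 : finType) (f : T1 -> seq T2) k w :
  runs (trHom f) tt k w tt <-> w = flatten (map f k).
Proof.
split.
- elim: k w => [|t k IH] w; first by case/runs_nil.
  case/runs_cons=> [[] [o [w' [ho [hr ->]]]]]; move: ho; rewrite inE => /eqP [->].
  by rewrite (IH _ hr).
- move->; elim: k => [|t k IH] /=; first by constructor.
  apply: RCons IH; by rewrite inE.
Qed.

Lemma cf_hom (T1 T2 : finType) (f : T1 -> seq T2) (L : seq T1 -> Prop) :
  context_free L -> context_free (fun w => exists x, L x /\ w = flatten (map f x)).
Proof.
move=> h; apply: cf_ext (cf_ntrans (trHom f) tt (fun _ => true) h) => w; split.
- case=> k [[] [hk [/runs_hom -> _]]]; by exists k.
- case=> x [hx ->]; exists x, tt; split=> //; split=> //; exact/runs_hom.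
Qed.

Lemma flatten_map1 (T1 T2 : Type) (f : T1 -> T2) (x : seq T1) :
  flatten (map (fun t => [:: f t]) x) = map f x.
Proof. by elim: x => //= t x ->. Qed.

Lemma cf_map (T1 T2 : finType) (f : T1 -> T2) (L : seq T1 -> Prop) :
  context_free L -> context_free (fun w => exists x, L x /\ w = map f x).
Proof.
move=> /(cf_hom (fun t => [:: f t])); apply: cf_ext => w.
by split; case=> x [hx ->]; exists x; rewrite flatten_map1.
Qed.

Lemma cf_word1 (T : finType) (x : seq T) : context_free (fun w => w = x).
Proof.
apply: cf_ext (cf_words [:: x]) => w; by rewrite mem_seq1; split => [/eqP|->].
Qed.

Lemma cf_or (T : finType) (L1 L2 : seq T -> Prop) :
  context_free L1 -> context_free L2 -> context_free (fun w => L1 w \/ L2 w).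
Proof.
move=> h1 h2.
pose K (j : option bool) : seq (T + option bool) -> Prop :=
  match j with
  | None => fun k => k \in [:: [:: inr (Some false)]; [:: inr (Some true)]]
  | Some b => fun k => exists x, (if b then L2 else L1) x /\ k = map inl x
  end.
have hK : forall j, context_free (K j).
  case=> [[]|] /=; [exact: cf_map|exact: cf_map|exact: cf_words].
have F : forall b w, lfp K (Some b) w <-> (if b then L2 else L1) w by move=> b; exact: lfp_fixed.
apply: cf_ext (cf_lfp hK None) => w; rewrite lfp_char /=; split.
- case=> k []; rewrite !inE => /orP [] /eqP -> hf; case: (fills_consJ hf) => w1 [w2 [-> [h /fills_nil ->]]];
    rewrite cats0; [left; exact: (F false w1).1 h|right; exact: (F true w1).1 h].
- case=> h; [exists [:: inr (Some false)]|exists [:: inr (Some true)]]; rewrite !inE eqxx ?orbT;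
    split=> //; rewrite -(cats0 w); constructor; try constructor; [exact: (F false w).2 h|exact: (F true w).2 h].
Qed.

Lemma fills_pairs (T J X : Type) (f : X -> T) (j : J) (Pj : J -> seq T -> Prop) (al : seq X) rest w :
  fills Pj (flatten [seq [:: inl (f a); inr j] | a <- al] ++ rest) w <->
  exists ps : seq (X * seq T), map fst ps = al /\ (forall p, List.In p ps -> Pj j p.2) /\
    exists w', w = flatten [seq f p.1 :: p.2 | p <- ps] ++ w' /\ fills Pj rest w'.
Proof.
elim: al w => [|a al IH] w /=.
- split; first by move=> h; exists [::]; split=> //; split=> //; exists w.
  by case=> ps [e [_ [w' [-> h]]]]; case: ps e h.
- split.
  + move=> hf; case: (fills_consT hf) => w1 [-> hf1]; case: (fills_consJ hf1) => t [w2 [-> [ht /IH [ps [e [hp [w' [-> hr]]]]]]]].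
    exists ((a, t) :: ps); rewrite /= e; split=> //; split; first by move=> p [<-|/hp].
    exists w'; by rewrite catA.
  + case=> ps [e [hp [w' [-> hr]]]]; case: ps e hp => [|[a' t] ps] //= [-> e] hp.
    rewrite -catA; constructor; constructor; first by apply: (hp (a, t)); left.
    apply/IH; exists ps; split=> //; split; first by move=> p hin; apply: hp; right.
    by exists w'.
Qed.

Lemma fills_pairsR (T J X : Type) (f : X -> T) (j : J) (Pj : J -> seq T -> Prop) (al : seq X) w :
  fills Pj (flatten [seq [:: inr j; inl (f a)] | a <- al]) w <->
  exists ps : seq (X * seq T), map fst ps = al /\ (forall p, List.In p ps -> Pj j p.2) /\
    w = flatten [seq p.2 ++ [:: f p.1] | p <- ps].
Proof.
elim: al w => [|a al IH] w /=.
- split; first by move/fills_nil ->; exists [::].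
  by case=> ps [e [_ ->]]; case: ps e => // _; constructor.
- split.
  + move=> hf; case: (fills_consJ hf) => t [w1 [-> [ht hf1]]]; case: (fills_consT hf1) => w2 [-> /IH [ps [e [hp ->]]]].
    exists ((a, t) :: ps); rewrite /= e; split=> //; split; first by move=> p [<-|/hp].
    by rewrite -catA.
  + case=> ps [e [hp ->]]; case: ps e hp => [|[a' t] ps] //= [-> e] hp.
    rewrite -catA; constructor; first by apply: (hp (a, t)); left.
    constructor; apply/IH; exists ps; split=> //; split=> // p hin; apply: hp; right; exact: hin.
Qed.
Section Trans.
Variables (X T J : Type).
Definition trH (f : X -> T) (j : J) (q : bool) (x : option X) : seq (bool * seq (T + J)) :=
  match q, x with
  | false, Some a => [:: (false, [:: inl (f a); inr j])]
  | false, None => [:: (true, [::])]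
  | true, _ => [::]
  end.
Definition trB (f : X -> T) (jT jD jR : J) (q : bool) (x : option X) : seq (bool * seq (T + J)) :=
  match q, x with
  | false, Some a => [:: (false, [:: inl (f a); inr jT])]
  | false, None => [:: (true, [:: inr jD])]
  | true, Some a => [:: (true, [:: inr jR; inl (f a)])]
  | true, None => [::]
  end.
End Trans.

Section TransLemmas.
Variables (X T J : finType).

Lemma trH_pre (f : X -> T) (j : J) al rest k q :
  runs (trH f j) false (map Some al ++ rest) k q <->
  exists k', k = flatten [seq [:: inl (f a); inr j] | a <- al] ++ k' /\ runs (trH f j) false rest k' q.
Proof.
elim: al k => [|a al IH] k /=; first by split; [move=> h; exists k|case=> k' [-> h]].
split.
- case/runs_cons=> q1 [o [w' [ho [hr ->]]]]; move: ho; rewrite inE => /eqP [E1 E2]; subst.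
  case/IH: hr => k' [-> hr]; by exists k'.
- case=> k' [-> hr]; apply: (RCons (q' := false) (o := [:: inl (f a); inr j])); first by rewrite inE.
  apply/IH; by exists k'.
Qed.

Lemma trB_pre (f : X -> T) (jT jD jR : J) al rest k q :
  runs (trB f jT jD jR) false (map Some al ++ rest) k q <->
  exists k', k = flatten [seq [:: inl (f a); inr jT] | a <- al] ++ k' /\ runs (trB f jT jD jR) false rest k' q.
Proof.
elim: al k => [|a al IH] k /=; first by split; [move=> h; exists k|case=> k' [-> h]].
split.
- case/runs_cons=> q1 [o [w' [ho [hr ->]]]]; move: ho; rewrite inE => /eqP [E1 E2]; subst.
  case/IH: hr => k' [-> hr]; by exists k'.
- case=> k' [-> hr]; apply: (RCons (q' := false) (o := [:: inl (f a); inr jT])); first by rewrite inE.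
  apply/IH; by exists k'.
Qed.

Lemma trB_post (f : X -> T) (jT jD jR : J) al k q :
  runs (trB f jT jD jR) true (map Some al) k q <->
  k = flatten [seq [:: inr jR; inl (f a)] | a <- al] /\ q = true.
Proof.
elim: al k q => [|a al IH] k q /=; first by split; [case/runs_nil|case=> -> ->; constructor].
split.
- case/runs_cons=> q1 [o [w' [ho [hr ->]]]]; move: ho; rewrite inE => /eqP [E1 E2]; subst.
  by case/IH: hr => -> ->.
- case=> -> ->; apply: (RCons (q' := true) (o := [:: inr jR; inl (f a)])); first by rewrite inE.
  by apply/IH.
Qed.

Lemma Hl_char (Mx : monoidT) (g : X -> Mx) (f : X -> T) (j : J) k :
  (exists y q, word_problem g y /\ runs (trH f j) false y k q /\ q) <->
  exists al, meval g al = munit Mx /\ k = flatten [seq [:: inl (f a); inr j] | a <- al].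
Proof.
split.
- case=> y [q [[u [v [-> e]]] [/trH_pre [k' [-> hr]] hq]]].
  case/runs_cons: hr => q1 [o [w' [ho [hr ->]]]]; move: ho; rewrite inE => /eqP [E1 E2]; subst.
  case: v e hr => [|b v] e hr.
  + case/runs_nil: hr => -> _; exists u; by rewrite cats0.
  + rewrite /= rev_cons in hr; move: hr; rewrite -cats1.
    case: (rev (map Some v)) => [|x s] /= /runs_cons [? [? [? []]]] //.
- case=> al [e ->]; exists (map Some al ++ [:: None]), true; split.
  + by exists al, [::].
  split=> //; apply/trH_pre; exists [::]; rewrite cats0; split=> //.
  apply: (RCons (q' := true) (o := [::]) (w := [::])); [by rewrite inE|constructor].
Qed.

Lemma Bl_char (Mx : monoidT) (g : X -> Mx) (f : X -> T) (jT jD jR : J) k :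
  (exists y q, word_problem g y /\ runs (trB f jT jD jR) false y k q /\ q) <->
  exists al be, meval g al = meval g be /\
    k = flatten [seq [:: inl (f a); inr jT] | a <- al] ++ inr jD :: flatten [seq [:: inr jR; inl (f a)] | a <- rev be].
Proof.
split.
- case=> y [q [[u [v [-> e]]] [/trB_pre [k' [-> hr]] hq]]].
  case/runs_cons: hr => q1 [o [w' [ho [hr ->]]]]; move: ho; rewrite inE => /eqP [E1 E2]; subst.
  move: hr; rewrite -map_rev => /trB_post [-> _]; by exists u, v.
- case=> al [be [e ->]]; exists (map Some al ++ None :: rev (map Some be)), true; split.
  + by exists al, be.
  split=> //; apply/trB_pre; exists (inr jD :: flatten [seq [:: inr jR; inl (f a)] | a <- rev be]); split=> //.
  apply: (RCons (q' := true) (o := [:: inr jD])); first by rewrite inE.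
  by rewrite -map_rev; apply/trB_post.
Qed.
End TransLemmas.
Section CFDl.
Variables (M N : monoidT) (A B : finType) (gA : A -> M) (gB : B -> N).
Hypotheses (hA : context_free (word_problem gA)) (hB : context_free (word_problem gB)).
Notation C := (A + B)%type.
Notation Ttl := (Ttl gA gB).
Notation Dl := (Dl gA gB).

Definition HlA (k : seq (C + unit)) := exists y q, word_problem gA y /\ runs (trH (@inl A B) tt) false y k q /\ q.
Definition HlB (k : seq (C + unit)) := exists y q, word_problem gB y /\ runs (trH (@inr A B) tt) false y k q /\ q.
Definition KT (j : unit) (k : seq (C + unit)) : Prop := k = [::] \/ k = [:: inr tt; inr tt] \/ HlA k \/ HlB k.

Lemma KT_cf j : context_free (KT j).
Proof.
apply: cf_or; first exact: cf_word1.
apply: cf_or; first exact: cf_word1.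
apply: cf_or; [exact: (cf_ntrans _ _ (fun q => q) hA)|exact: (cf_ntrans _ _ (fun q => q) hB)].
Qed.

Lemma Ttl_lfp w : Ttl w <-> lfp KT tt w.
Proof.
split.
- elim=> [|x y _ IHx _ IHy|ps hp IH e|ps hp IH e].
  + apply: (lfp_closed (k := [::])); [by left|constructor].
  + apply: (lfp_closed (k := [:: inr tt; inr tt])); first by right; left.
    rewrite -(cats0 y); do 2 (constructor=> //); constructor.
  + apply: (lfp_closed (k := flatten [seq [:: inl (inl a); inr tt] | a <- map fst ps] ++ [::])).
      right; right; left; rewrite cats0; apply/(Hl_char gA); by exists (map fst ps).
    apply/fills_pairs; exists ps; split=> //; split=> //; exists [::]; rewrite cats0; split=> //; constructor.
  + apply: (lfp_closed (k := flatten [seq [:: inl (inr a); inr tt] | a <- map fst ps] ++ [::])).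
      right; right; right; rewrite cats0; apply/(Hl_char gB); by exists (map fst ps).
    apply/fills_pairs; exists ps; split=> //; split=> //; exists [::]; rewrite cats0; split=> //; constructor.
- move=> h; apply: (h (fun _ w => Ttl w)) => j k w' hk hf.
  case: hk => [E|[E|[hk|hk]]]; try subst k.
  + rewrite (fills_nil hf); constructor.
  + case: (fills_consJ hf) => w1 [w2 [-> [h1 hf2]]]; case: (fills_consJ hf2) => w3 [w4 [-> [h3 /fills_nil ->]]].
    rewrite cats0; exact: Tcat.
  + case/(Hl_char gA): hk => al [e E]; subst k.
    move: hf; rewrite -(cats0 (flatten _)) => /fills_pairs [ps [ep [hp [w'' [-> /fills_nil ->]]]]].
    rewrite cats0; apply: TM hp _; by rewrite ep.
  + case/(Hl_char gB): hk => al [e E]; subst k.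
    move: hf; rewrite -(cats0 (flatten _)) => /fills_pairs [ps [ep [hp [w'' [-> /fills_nil ->]]]]].
    rewrite cats0; apply: TN hp _; by rewrite ep.
Qed.

Lemma cf_Ttl : context_free Ttl.
Proof. apply: cf_ext (cf_lfp KT_cf tt) => w; by rewrite Ttl_lfp. Qed.

Lemma In_rev (T : Type) (x : T) s : List.In x (rev s) -> List.In x s.
Proof.
elim: s => [|y s IH] //; rewrite rev_cons -cats1 => h.
case: (List.in_app_or _ _ _ h) => [/IH|[<-|//]]; by [right|left].
Qed.

Section Bl.
Variables (X : Type) (f : X -> C).

Lemma blk_rcons (ps : seq (X * seq C)) p : blk f (rcons ps p) = blk f ps ++ f p.1 :: p.2.
Proof. by rewrite /blk -cats1 map_cat flatten_cat /= cats0. Qed.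

Lemma map_blk ps : map Some (blk f ps) = flatten [seq Some (f p.1) :: map Some p.2 | p <- ps].
Proof. elim: ps => [|p ps IH] //=; by rewrite map_cat IH. Qed.

Lemma rev_blk ps : rev (map Some (blk f ps)) =
  flatten [seq map Some (rev p.2) ++ [:: Some (f p.1)] | p <- rev ps].
Proof.
elim: ps => [|p ps IH] //.
rewrite (_ : blk f (p :: ps) = f p.1 :: p.2 ++ blk f ps) // map_cons rev_cons map_cat rev_cat IH.
rewrite rev_cons -!cats1 map_cat flatten_cat /= cats0 map_rev catA.
by rewrite (map_rev _ p.2).
Qed.

Variable Pj : option bool -> seq (option C) -> Prop.

Lemma conv_ps (ps' : seq (X * seq (option C))) :
  (forall p, List.In p ps' -> exists x, Ttl x /\ p.2 = map Some x) ->
  exists ps, map fst ps = map fst ps' /\ (forall p, List.In p ps -> Ttl p.2) /\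
    flatten [seq Some (f p.1) :: p.2 | p <- ps'] = map Some (blk f ps).
Proof.
elim: ps' => [|[a t] ps' IH] h; first by exists [::].
case: (h (a, t)) => [|x [hx /= Et]]; first by left.
case: IH => [p hp|ps [e [hp E]]]; first by apply: h; right.
exists ((a, x) :: ps); rewrite /= e; split=> //; split; first by move=> p [<-|/hp].
by rewrite E Et map_cat.
Qed.

Lemma conv_qs (qs' : seq (X * seq (option C))) :
  (forall p, List.In p qs' -> exists x, Ttl x /\ p.2 = map Some (rev x)) ->
  exists qs, map fst qs = rev (map fst qs') /\ (forall p, List.In p qs -> Ttl p.2) /\
    flatten [seq p.2 ++ [:: Some (f p.1)] | p <- qs'] = rev (map Some (blk f qs)).
Proof.
elim: qs' => [|[a t] qs' IH] h; first by exists [::].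
case: (h (a, t)) => [|x [hx /= Et]]; first by left.
case: IH => [p hp|qs [e [hp E]]]; first by apply: h; right.
exists (rcons qs (a, x)); rewrite map_rcons e rev_cons; split=> //; split.
  move=> p; rewrite -cats1 => hin; case: (List.in_app_or _ _ _ hin) => [/hp //|[<-|//]]; exact: hx.
by rewrite (blk_rcons qs (a, x)) map_cat rev_cat /= E Et rev_cons -cats1 map_rev.
Qed.

Lemma bl_fill al be w :
  (forall t, Pj (Some false) t -> exists x, Ttl x /\ t = map Some x) ->
  (forall t, Pj (Some true) t -> exists x, Ttl x /\ t = map Some (rev x)) ->
  fills Pj (flatten [seq [:: inl (Some (f a)); inr (Some false)] | a <- al] ++
            inr None :: flatten [seq [:: inr (Some true); inl (Some (f a))] | a <- rev be]) w ->
  exists ps qs s, map fst ps = al /\ map fst qs = be /\ (forall p, List.In p ps -> Ttl p.2) /\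
    (forall p, List.In p qs -> Ttl p.2) /\ Pj None s /\ w = map Some (blk f ps) ++ s ++ rev (map Some (blk f qs)).
Proof.
move=> hF hR /(fills_pairs (fun a => Some (f a))) [ps' [e1 [hp' [w' [-> hf]]]]].
case: (fills_consJ hf) => s [w'' [-> [hs /(fills_pairsR (fun a => Some (f a))) [qs' [e2 [hq' ->]]]]]].
case: (conv_ps (ps' := ps')) => [p /hp' /hF //|ps [ep [hp Ep]]].
case: (conv_qs (qs' := qs')) => [p /hq' /hR //|qs [eq [hq Eq]]].
exists ps, qs, s; rewrite ep e1 eq e2 revK Ep Eq; do 5 (split=> //).
Qed.

Lemma bl_fill_inv ps qs s :
  (forall x, Ttl x -> Pj (Some false) (map Some x)) ->
  (forall x, Ttl x -> Pj (Some true) (map Some (rev x))) ->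
  (forall p, List.In p ps -> Ttl p.2) -> (forall p, List.In p qs -> Ttl p.2) -> Pj None s ->
  fills Pj (flatten [seq [:: inl (Some (f a)); inr (Some false)] | a <- map fst ps] ++
            inr None :: flatten [seq [:: inr (Some true); inl (Some (f a))] | a <- rev (map fst qs)])
    (map Some (blk f ps) ++ s ++ rev (map Some (blk f qs))).
Proof.
move=> cF cR hp hq hs; apply/(fills_pairs (fun a => Some (f a))).
exists [seq (p.1, map Some p.2) | p <- ps]; split; first by rewrite -map_comp.
split; first by move=> p /List.in_map_iff [p' [<- hin]] /=; apply: cF; apply: hp.
exists (s ++ rev (map Some (blk f qs))); split; first by rewrite map_blk -map_comp.
constructor=> //; apply/(fills_pairsR (fun a => Some (f a))).
exists [seq (p.1, map Some (rev p.2)) | p <- rev qs]; split; first by rewrite -map_comp map_rev.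
split; first by move=> p /List.in_map_iff [p' [<- hin]] /=; apply: cR; apply: hq; exact: In_rev hin.
by rewrite rev_blk -map_comp.
Qed.
End Bl.

Definition BlA (k : seq (option C + option bool)) := exists y q, word_problem gA y /\
  runs (trB (fun a => Some (@inl A B a)) (Some false) None (Some true)) false y k q /\ q.
Definition BlB (k : seq (option C + option bool)) := exists y q, word_problem gB y /\
  runs (trB (fun a => Some (@inr A B a)) (Some false) None (Some true)) false y k q /\ q.

Definition KD (j : option bool) (k : seq (option C + option bool)) : Prop :=
  match j with
  | None => k = [:: inl None] \/ k = [:: inr (Some false); inr None; inr (Some true)] \/ BlA k \/ BlB k
  | Some false => exists x, Ttl x /\ k = map inl (map Some x)
  | Some true => exists x, Ttl x /\ k = map inl (map Some (rev x))
  end.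

Lemma KD_cf j : context_free (KD j).
Proof.
case: j => [[]|] /=.
- apply: cf_ext (cf_map (fun c => inl (Some c)) (cf_rev cf_Ttl)) => k; split.
  + case=> x [hx ->]; exists (rev x); by rewrite revK -map_comp.
  + case=> x [hx ->]; exists (rev x); by rewrite revK -map_comp.
- apply: cf_ext (cf_map (fun c => inl (Some c)) cf_Ttl) => k; split.
  + case=> x [hx ->]; exists x; by rewrite -map_comp.
  + case=> x [hx ->]; exists x; by rewrite -map_comp.
apply: cf_or; first exact: cf_word1.
apply: cf_or; first exact: cf_word1.
apply: cf_or; [exact: (cf_ntrans _ _ (fun q => q) hA)|exact: (cf_ntrans _ _ (fun q => q) hB)].
Qed.

Lemma KD_F w : lfp KD (Some false) w <-> exists x, Ttl x /\ w = map Some x.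
Proof.
move: w; apply: (@lfp_fixed _ _ KD (Some false) (fun w => exists x, Ttl x /\ w = map Some x)) => k /=; split.
- case=> x [hx ->]; exists (map Some x); split=> //; by exists x.
- by case=> x' [[x [hx ->]] ->]; exists x.
Qed.

Lemma KD_R w : lfp KD (Some true) w <-> exists x, Ttl x /\ w = map Some (rev x).
Proof.
move: w; apply: (@lfp_fixed _ _ KD (Some true) (fun w => exists x, Ttl x /\ w = map Some (rev x))) => k /=; split.
- case=> x [hx ->]; exists (map Some (rev x)); split=> //; by exists x.
- by case=> x' [[x [hx ->]] ->]; exists x.
Qed.

Lemma Dl_lfp w : Dl w <-> lfp KD None w.
Proof.
have cF : forall x, Ttl x -> lfp KD (Some false) (map Some x) by move=> x hx; apply/KD_F; exists x.
have cR : forall x, Ttl x -> lfp KD (Some true) (map Some (rev x)) by move=> x hx; apply/KD_R; exists x.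
split.
- elim=> [|x y s hx hy _ IH|ps qs s hp hq e _ IH|ps qs s hp hq e _ IH].
  + apply: (lfp_closed (k := [:: inl None])); [by left|do 2 constructor].
  + apply: (lfp_closed (k := [:: inr (Some false); inr None; inr (Some true)])); first by right; left.
    rewrite -[map Some (rev y)]cats0; do 3 (constructor; auto); constructor.
  + apply: lfp_closed; last by apply: bl_fill_inv.
    right; right; left; apply/(Bl_char gA); by exists (map fst ps), (map fst qs).
  + apply: lfp_closed; last by apply: bl_fill_inv.
    right; right; right; apply/(Bl_char gB); by exists (map fst ps), (map fst qs).
- move=> h; apply: (h (fun j w => match j with
      | None => Dl w
      | Some false => exists x, Ttl x /\ w = map Some x
      | Some true => exists x, Ttl x /\ w = map Some (rev x) end)) => j k w' hk hf.
  case: j hk hf => [[]|] /=.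
  + by case=> x [hx ->] /fills_terms ->; exists x.
  + by case=> x [hx ->] /fills_terms ->; exists x.
  case=> [E|[E|[hk|hk]]] hf; try subst k.
  + case: (fills_consT hf) => w1 [-> /fills_nil ->]; constructor.
  + case: (fills_consJ hf) => w1 [w2 [-> [[x [hx ->]] hf2]]].
    case: (fills_consJ hf2) => w3 [w4 [-> [h3 hf3]]].
    case: (fills_consJ hf3) => w5 [w6 [-> [[y [hy ->]] /fills_nil ->]]].
    rewrite cats0; exact: Dins.
  + case/(Bl_char gA): hk => al [be [e E]]; subst k.
    case: (bl_fill (f := @inl A B) (Pj := fun j w => match j with
      | None => Dl w
      | Some false => exists x, Ttl x /\ w = map Some x
      | Some true => exists x, Ttl x /\ w = map Some (rev x) end) _ _ hf) => // ps [qs [s [e1 [e2 [hp [hq [hs ->]]]]]]].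
    apply: DM => //; by rewrite e1 e2.
  + case/(Bl_char gB): hk => al [be [e E]]; subst k.
    case: (bl_fill (f := @inr A B) (Pj := fun j w => match j with
      | None => Dl w
      | Some false => exists x, Ttl x /\ w = map Some x
      | Some true => exists x, Ttl x /\ w = map Some (rev x) end) _ _ hf) => // ps [qs [s [e1 [e2 [hp [hq [hs ->]]]]]]].
    apply: DN => //; by rewrite e1 e2.
Qed.

Lemma cf_Dl : context_free Dl.
Proof. apply: cf_ext (cf_lfp KD_cf None) => w; by rewrite Dl_lfp. Qed.
End CFDl.
Lemma UCF_fp (M N P : monoidT) (iM : M -> P) (iN : N -> P) :
  is_free_product iM iN -> UCF M -> UCF N -> UCF P.
Proof.
move=> H [A [gA [genA cfA]]] [B [gB [genB cfB]]].
exists (A + B)%type, (gP iM iN gA gB); split; first exact: gP_generates.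
apply: cf_ext (cf_Dl cfA cfB) => s; by rewrite (WP_Dl H).
Qed.

Lemma split_hash (X : Type) (a c : seq X) b d :
  map Some a ++ None :: b = map Some c ++ None :: d -> a = c /\ b = d.
Proof.
elim: a c => [|x a IH] [|y c] //=; first by case.
case=> -> /IH [-> ->]; by [].
Qed.

Section Inv.
Variables (M N P : monoidT) (iM : M -> P) (iN : N -> P).
Hypothesis H : is_free_product iM iN.
Variables (B : finType) (gB : B -> P).
Hypothesis genP : generates gB.
Hypothesis cfP : context_free (word_problem gB).
Variable r : P -> M.
Hypotheses (hr : is_hom r) (rM : forall m, r (iM m) = m).

Definition pb (b : B) : bool := ~~ isone (r (gB b)).
Definition A' : finType := {b : B | pb b}.
Definition gM (a : A') : M := r (gB (proj1_sig a)).

Lemma gM_generates : generates gM.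
Proof.
move=> m; case: (genP (iM m)) => w hw.
have -> : m = meval (fun b => r (gB b)) w by rewrite -(hom_meval _ _ hr) hw rM.
elim: w {hw} => [|b w [u hu]] /=; first by exists [::].
case hb: (pb b).
- exists (exist _ b hb :: u); by rewrite /= hu.
- exists u; move: hb; rewrite /pb => /negbFE /isoneP ->; by rewrite munitl.
Qed.

Lemma hw_ex (a : A') : { w : seq B | meval gB w = iM (gM a) }.
Proof. apply: constructive_indefinite_description; exact: genP. Qed.
Definition hw (a : A') : seq B := proj1_sig (hw_ex a).
Lemma hwE a : meval gB (hw a) = iM (gM a).
Proof. exact: proj2_sig (hw_ex a). Qed.

Lemma hw_ne a : 0 < size (hw a).
Proof.
rewrite /hw; case: hw_ex => [[|x w]] //= e.
have E : gM a = munit M by rewrite -(rM (gM a)) -e; case: hr.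
have := proj2_sig a; rewrite /pb -/(gM a) E; by case: isoneP.
Qed.

Definition hh (ph : bool) (a : A') : seq B := if ph then rev (hw a) else hw a.
Lemma hh_ne ph a : 0 < size (hh ph a).
Proof. rewrite /hh; case: ph; rewrite ?size_rev; exact: hw_ne. Qed.

Definition Kb := (\max_(a : A') size (hw a)).+1.
Lemma hh_lt ph a j : j < size (hh ph a) -> j < Kb.
Proof.
rewrite /hh /Kb; case: ph; rewrite ?size_rev => h; apply: leq_trans h _; apply: leqW;
  exact: (leq_bigmax (F := fun a => size (hw a))).
Qed.

Definition St : finType := (bool * option (A' * 'I_Kb))%type.
Definition nextst (ph : bool) (a : A') (j : nat) : St :=
  if j < size (hh ph a) then (ph, Some (a, inord j)) else (ph, None).

Definition trI (q : St) (x : option B) : seq (St * seq (option A')) :=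
  let (ph, oq) := q in
  match oq, x with
  | None, None => if ph then [::] else [:: ((true, None), [:: None])]
  | None, Some c => [seq (nextst ph a 1, [:: Some a]) | a <- enum A' & nth c (hh ph a) 0 == c]
  | Some (a, j), Some c => if (j < size (hh ph a)) && (nth c (hh ph a) j == c)
                            then [:: (nextst ph a j.+1, [::])] else [::]
  | Some _, None => [::]
  end.

Lemma nextst_lt ph a j : j < size (hh ph a) -> nextst ph a j = (ph, Some (a, inord j)).
Proof. by rewrite /nextst => ->. Qed.

Lemma mid_run ph a y w q : runs trI (ph, None) y w q ->
  forall d j, size (hh ph a) - j = d -> 0 < j <= size (hh ph a) ->
  runs trI (nextst ph a j) (map Some (drop j (hh ph a)) ++ y) w q.
Proof.
move=> hrun; elim=> [|d IH] j hd /andP [j0 js].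
- have e : j = size (hh ph a) by apply/eqP; rewrite eqn_leq js /= -subn_eq0 hd.
  by rewrite /nextst e ltnn drop_size.
- have jl : j < size (hh ph a) by rewrite -subn_gt0 hd.
  have x0 : B by case: (hh ph a) jl => [|x _] //.
  rewrite nextst_lt // (drop_nth x0 jl) /=.
  apply: (RCons (q' := nextst ph a j.+1) (o := [::])).
    rewrite /= inordK; last exact: hh_lt jl.
    by rewrite jl (set_nth_default x0 _ jl) eqxx inE.
  apply: IH; first by rewrite subnS hd.
  by rewrite ltn0Sn jl.
Qed.

Lemma mid_dec ph a : forall d j, size (hh ph a) - j = d -> 0 < j <= size (hh ph a) ->
  forall y w q, runs trI (nextst ph a j) y w q -> q.2 = None ->
  exists y', y = map Some (drop j (hh ph a)) ++ y' /\ runs trI (ph, None) y' w q.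
Proof.
elim=> [|d IH] j hd /andP [j0 js] y w q hrun hq.
- have e : j = size (hh ph a) by apply/eqP; rewrite eqn_leq js /= -subn_eq0 hd.
  move: hrun; rewrite /nextst e ltnn drop_size => hrun; by exists y.
- have jl : j < size (hh ph a) by rewrite -subn_gt0 hd.
  move: hrun; rewrite nextst_lt //; case: y => [|[c|] y1].
  + by case/runs_nil => _ E; rewrite E in hq.
  + case/runs_cons=> q1 [o [w' [ho [hrn ->]]]]; move: ho; rewrite /= inordK; last exact: hh_lt jl.
    rewrite jl /=; case: eqP => // ec; rewrite inE => /eqP [E1 E2]; subst q1 o.
    case: (IH j.+1 _ _ y1 w' q hrn hq) => [||y' [-> hrn']]; first by rewrite subnS hd.
      by rewrite ltn0Sn jl.
    exists y'; split=> //; by rewrite (drop_nth c jl) ec.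
  + by case/runs_cons=> q1 [o [w' [ho _]]].
Qed.

Lemma blk_run ph a y w q : runs trI (ph, None) y w q ->
  runs trI (ph, None) (map Some (hh ph a) ++ y) (Some a :: w) q.
Proof.
move=> hrun; have hm := mid_run (a := a) hrun (erefl _) (j := 1).
have hne := hh_ne ph a; move: hm hne.
case E: (hh ph a) => [|c cs] //= hm _.
apply: (RCons (q' := nextst ph a 1) (o := [:: Some a])); last by move: hm; rewrite drop0; apply.
rewrite /= mem_map; last by move=> x1 x2 [].
by rewrite mem_filter E eqxx mem_enum.
Qed.

Lemma blk_dec ph c y w q : runs trI (ph, None) (Some c :: y) w q -> q.2 = None ->
  exists a y' w', map Some (hh ph a) ++ y' = Some c :: y /\ w = Some a :: w' /\ runs trI (ph, None) y' w' q.
Proof.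
case/runs_cons=> q1 [o [w' [ho [hrn ->]]]] hq; move: ho => /= /mapP [a].
rewrite mem_filter => /andP [hc _] [E1 E2]; subst q1 o.
have hne := hh_ne ph a.
case: (mid_dec (erefl _) (j := 1) _ hrn hq) => [|y' [E hrn']]; first by rewrite hne.
exists a, y', w'; split=> //; move: E hc hne; case: (hh ph a) => [|c' cs] //= -> /eqP -> _.
by rewrite drop0.
Qed.

Definition FL (ph : bool) (u : seq A') : seq B := flatten (map (hh ph) u).

Lemma L_true y w : runs trI (true, None) y w (true, None) <->
  exists v, y = map Some (FL true v) /\ w = map Some v.
Proof.
split; last first.
  case=> v [-> ->]; elim: v => [|a v IH] /=; first by constructor.
  rewrite map_cat; exact: blk_run.
move: {2}(size y) (leqnn (size y)) => n; elim: n y w => [|n IH] y w.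
- case: y => // _ /runs_nil [-> _]; by exists [::].
- case: y => [|[c|] y] hs.
  + case/runs_nil=> -> _; by exists [::].
  + case/blk_dec=> // a [y' [w' [E [-> hrn]]]].
    have hs' : size y' <= n.
      have := f_equal size E; rewrite size_cat size_map /= => e.
      have := hh_ne true a; move: hs e; rewrite /=; lia.
    case: (IH _ _ hs' hrn) => v [Ey ->]; exists (a :: v); split=> //.
    by rewrite -E Ey /FL /= map_cat.
  + by case/runs_cons=> q1 [o [w' [ho _]]].
Qed.

Lemma L_false y w : runs trI (false, None) y w (true, None) <->
  exists u y2 w2, y = map Some (FL false u) ++ None :: y2 /\ w = map Some u ++ None :: w2 /\
    runs trI (true, None) y2 w2 (true, None).
Proof.
split; last first.
  case=> u [y2 [w2 [-> [-> hrn]]]]; elim: u => [|a u IH] /=.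
  + apply: (RCons (q' := (true, None)) (o := [:: None])) => //; by rewrite inE.
  + rewrite map_cat -catA; exact: blk_run.
move: {2}(size y) (leqnn (size y)) => n; elim: n y w => [|n IH] y w.
- by case: y => // _ /runs_nil [_ [E]].
- case: y => [|[c|] y] hs.
  + by case/runs_nil=> _ [E].
  + case/blk_dec=> // a [y' [w' [E [-> hrn]]]].
    have hs' : size y' <= n.
      have := f_equal size E; rewrite size_cat size_map /= => e.
      have := hh_ne false a; move: hs e; rewrite /=; lia.
    case: (IH _ _ hs' hrn) => u [y2 [w2 [E2 [-> hr2]]]]; exists (a :: u), y2, w2; split=> //.
    by rewrite -E E2 /FL /= !map_cat -catA.
  + case/runs_cons=> q1 [o [w' [ho [hrn ->]]]]; move: ho; rewrite /= inE => /eqP [E1 E2]; subst.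
    by exists [::], y, w'.
Qed.

Lemma FL_eval u : meval gB (FL false u) = iM (meval gM u).
Proof.
case: H => [[hM1 hM2] _].
elim: u => [|a u IH] /=; first by rewrite hM1.
by rewrite meval_cat -/(FL false u) IH hM2 hwE.
Qed.

Lemma FL_rev v : FL true (rev v) = rev (FL false v).
Proof.
elim: v => [|a v IH] //; rewrite rev_cons /FL -cats1 map_cat flatten_cat -/(FL true (rev v)) IH.
by rewrite /= cats0 rev_cat.
Qed.

Lemma WP_M_trans w : word_problem gM w <->
  exists y q, word_problem gB y /\ runs trI (false, None) y w q /\ q == (true, None).
Proof.
split.
- case=> u [v [-> e]].
  exists (map Some (FL false u) ++ None :: map Some (FL true (rev v))), (true, None); split; last first.
    split=> //; apply/L_false; exists u, (map Some (FL true (rev v))), (rev (map Some v)).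
    split=> //; split=> //; apply/L_true; exists (rev v); by rewrite map_rev.
  exists (FL false u), (FL false v); rewrite FL_rev map_rev; split=> //.
  by rewrite !FL_eval e.
- case=> y [q [[u1 [v1 [-> e]]] [hrn /eqP E]]]; subst q.
  case/L_false: hrn => u [y2 [w2 [E [-> /L_true [v' [E2 ->]]]]]].
  move: E; rewrite E2 -(revK v') FL_rev map_rev => /split_hash [e1 e2].
  move: e2 => /(f_equal rev); rewrite !revK => /(inj_map (@Some_inj _)) e2.
  exists u, (rev v'); rewrite map_rev revK; split=> //.
  apply: (iM_inj H); by rewrite -!FL_eval -e1 -e2.
Qed.

Lemma UCF_M : UCF M.
Proof.
exists A', gM; split; first exact: gM_generates.
apply: cf_ext (cf_ntrans trI (false, None) (fun q => q == (true, None)) cfP) => w.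
by rewrite WP_M_trans.
Qed.
End Inv.

Lemma UCF_left (M N P : monoidT) (iM : M -> P) (iN : N -> P) :
  is_free_product iM iN -> UCF P -> UCF M.
Proof.
move=> H [B [gB [genP cfP]]].
case: (retract H) => r [hr [rM _]].
exact: (UCF_M H genP cfP hr rM).
Qed.

Theorem mainTheorem10 (M N P : monoidT) (iM : M -> P) (iN : N -> P) :
  is_free_product iM iN -> (UCF P <-> UCF M /\ UCF N).
Proof.
move=> H; split.
- move=> h; split; [exact: UCF_left H h|exact: UCF_left (fp_sym H) h].
- case=> hM hN; exact: UCF_fp H hM hN.
Qed.
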